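(* Let $\wedge$ be any T-norm. If ${\mathcal R}_A$ is a similarity relation (with respect to $\wedge$) on the alphabet $\mathcal{F}\cup\mathcal{V}$ satisfying the conditions in the context, then the fuzzy relation ${\mathcal R}$ on terms induced by ${\mathcal R}_A$ and $\wedge$ is a similarity relation on terms.
   Context: Simple types are generated by $\tau ::= \delta \mid \tau\to\tau$ over basic types $\delta$. There are disjoint countably infinite sets $\mathcal{V}$ of typed variables and $\mathcal{F}$ of typed constants. Terms are simply typed $\lambda$-terms $t ::= x \mid c \mid \lambda x.t \mid (t_1\,t_2)$ considered modulo $\alpha\beta\eta$; $t\updownarrow_\beta^\eta$ denotes the $\eta$-long $\beta$-normal form. A T-norm $\wedge$ is an associative, commutative, non-decreasing binary operation on $[0,1]$ with unit $1$. A fuzzy relation on a set $S$ is a map $S\times S\to[0,1]$; it is a similarity relation if it is reflexive (${\mathcal R}(s,s)=1$ for all $s$), symmetric, and $\wedge$-transitive (${\mathcal R}(s_1,s_2)\ge {\mathcal R}(s_1,s)\wedge{\mathcal R}(s,s_2)$ for all $s_1,s_2,s$). The fuzzy relation ${\mathcal R}_A$ on $\mathcal{F}\cup\mathcal{V}$ satisfies: ${\mathcal R}_A(x,y)=0$ for distinct variables $x,y$; ${\mathcal R}_A(f,g)=0$ for constants $f,g$ of different types; ${\mathcal R}_A(x,f)={\mathcal R}_A(f,x)=0$ for a variable $x$ and a constant $f$. The induced relation ${\mathcal R}$ on terms is defined, for terms in $\eta$-long $\beta$-normal form, by ${\mathcal R}(a,b)={\mathcal R}_A(a,b)$ for $a,b\in\mathcal{F}\cup\mathcal{V}$;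 ${\mathcal R}((t_1\,s_1),(t_2\,s_2))={\mathcal R}(t_1,t_2)\wedge{\mathcal R}(s_1,s_2)$; ${\mathcal R}(\lambda x.t,\lambda y.s)={\mathcal R}(t\{x\mapsto z\},s\{y\mapsto z\})$ where $x,y,z$ have the same type and $z$ is fresh; ${\mathcal R}(t,s)=0$ otherwise; and for arbitrary terms ${\mathcal R}(t,s)={\mathcal R}(t\updownarrow_\beta^\eta,s\updownarrow_\beta^\eta)$. *)

(* Defs.v *)
From HB Require Import structures.
From mathcomp Require Import all_boot all_order all_algebra.
From mathcomp Require Import reals.
Set Implicit Arguments. Unset Strict Implicit. Unset Printing Implicit Defensive.
Import Order.TTheory GRing.Theory Num.Theory.
Local Open Scope ring_scope.

Inductive sty (B : Type) := Base of B | Arr of sty B & sty B.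
Arguments Base {B}. Arguments Arr {B}.

Fixpoint sty_eqb (B : eqType) (a b : sty B) : bool :=
  match a, b with
  | Base x, Base y => x == y
  | Arr a1 a2, Arr b1 b2 => sty_eqb a1 b1 && sty_eqb a2 b2
  | _, _ => false
  end.

Lemma sty_eqP (B : eqType) : Equality.axiom (@sty_eqb B).
Proof.
elim=> [x|a1 IH1 a2 IH2] [y|b1 b2] /=; try by constructor.
- by apply: (iffP eqP) => [->|[]].
- apply: (iffP andP) => [[H1 H2]|[E1 E2]].
    + by move: (IH1 b1) (IH2 b2); rewrite H1 H2 => /= R1 R2; inversion R1; inversion R2; subst.
    + by subst; split; [case: (IH1 b1) | case: (IH2 b2)].
Qed.
HB.instance Definition _ (B : eqType) := hasDecEq.Build (sty B) (@sty_eqP B).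

(* A variable is a pair (name, type) : nat * sty B, so there are       *)
(* countably infinitely many variables of every type. Constants are    *)
(* elements of C, typed by ctype : C -> sty B.                         *)
Section Terms.
Variables (B C : eqType) (ctype : C -> sty B).

Inductive term :=
| Var of nat & sty B
| Cst of C
| Lam of nat & sty B & term
| App of term & term.

Inductive sym := SV of nat & sty B | SC of C.

Definition sym_eqb (a b : sym) : bool :=
  match a, b with
  | SV x A, SV y A' => (x == y) && (A == A')
  | SC c, SC d => c == d
  | _, _ => false
  end.

Definition sym_type (a : sym) : sty B :=
  match a with SV _ A => A | SC c => ctype c end.

Fixpoint typeof (t : term) : option (sty B) :=
  match t with
  | Var _ A => Some A
  | Cst c => Some (ctype c)
  | Lam _ A b => omap (Arr A) (typeof b)
  | App u s =>
      match typeof u, typeof s with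
      | Some (Arr A1 A2), Some A3 => if A1 == A3 then Some A2 else None
      | _, _ => None
      end
  end.

Definition is_base (o : option (sty B)) : bool :=
  if o is Some (Base _) then true else false.

(* t is a well-typed term in eta-long beta-normal form:
   t = \x1..xn. h u1 .. um  with h an atom (variable or constant), each ui
   in eta-long beta-normal form, and h u1 .. um of basic type.
   [neutral t]: t is h u1 .. um with the ui eta-long beta-normal. *)
Fixpoint lnf (t : term) : bool :=
  match t with
  | Lam _ _ b => lnf b
  | Var _ _ | Cst _ => is_base (typeof t)
  | App u s => is_base (typeof t) && neutral u && lnf s
  end
with neutral (t : term) : bool :=
  match t with
  | Var _ _ | Cst _ => true
  | App u s => neutral u && lnf s
  | Lam _ _ _ => false
  end.

Definition wt_lnf (t : term) : Prop := typeof t != None /\ lnf t.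

Fixpoint tsize (t : term) : nat :=
  match t with
  | Var _ _ | Cst _ => 1
  | Lam _ _ b => (tsize b).+1
  | App u s => (tsize u + tsize s).+1
  end.

Fixpoint maxname (t : term) : nat :=
  match t with
  | Var x _ => x
  | Cst _ => 0
  | Lam x _ b => maxn x (maxname b)
  | App u s => maxn (maxname u) (maxname s)
  end.

(* t{(x,A) |-> (z,A)} : replace the free occurrences of variable (x,A)
   by the variable (z,A); capture-free whenever z does not occur in t. *)
Fixpoint rename (x : nat) (A : sty B) (z : nat) (t : term) : term :=
  match t with
  | Var y A' => if (y == x) && (A' == A) then Var z A else t
  | Cst _ => t
  | Lam y A' b => if (y == x) && (A' == A) then t else Lam y A' (rename x A z b)
  | App u s => App (rename x A z u) (rename x A z s)
  end.

Definition atom_of (t : term) : option sym :=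
  match t with
  | Var x A => Some (SV x A)
  | Cst c => Some (SC c)
  | _ => None
  end.

End Terms.

Arguments Var {B C}. Arguments Cst {B C}. Arguments Lam {B C}. Arguments App {B C}.
Arguments SV {B C}. Arguments SC {B C}.

Definition in01 (R : realType) (x : R) : Prop := 0 <= x <= 1.

Definition tnorm (R : realType) (tn : R -> R -> R) : Prop :=
  [/\ (forall x y, in01 x -> in01 y -> in01 (tn x y)),
      (forall x y z, in01 x -> in01 y -> in01 z -> tn x (tn y z) = tn (tn x y) z),
      (forall x y, in01 x -> in01 y -> tn x y = tn y x),
      (forall x x' y y', in01 x -> in01 x' -> in01 y -> in01 y' ->
          x <= x' -> y <= y' -> tn x y <= tn x' y') &
      (forall x, in01 x -> tn x 1 = x)].

Definition fuzzy_rel (R : realType) (S : Type) (P : S -> Prop) (Rel : S -> S -> R) :=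
  forall s1 s2, P s1 -> P s2 -> in01 (Rel s1 s2).

Definition similarity (R : realType) (S : Type) (P : S -> Prop)
    (tn : R -> R -> R) (Rel : S -> S -> R) : Prop :=
  [/\ fuzzy_rel P Rel,
      (forall s, P s -> Rel s s = 1),
      (forall s1 s2, P s1 -> P s2 -> Rel s1 s2 = Rel s2 s1) &
      (forall s1 s2 s, P s1 -> P s2 -> P s ->
          tn (Rel s1 s) (Rel s s2) <= Rel s1 s2)].

Definition RA_conditions (R : realType) (B C : eqType) (ctype : C -> sty B)
    (RA : sym B C -> sym B C -> R) : Prop :=
  [/\ (forall x A y A', (x, A) != (y, A') -> RA (SV x A) (SV y A') = 0),
      (forall f g, ctype f != ctype g -> RA (SC f) (SC g) = 0),
      (forall x A f, RA (SV x A) (SC f) = 0) &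
      (forall x A f, RA (SC f) (SV x A) = 0)].

(* Defined by the structural clauses of the paper; the fuel n only     *)
(* serves to justify termination (renaming preserves size) and is      *)
(* always sufficient for n = max of the sizes.                         *)
Section Induced.
Variables (R : realType) (B C : eqType).
Variables (tn : R -> R -> R) (RA : sym B C -> sym B C -> R).

Fixpoint Rfuel (n : nat) (t s : term B C) : R :=
  match n with
  | 0 => 0
  | n'.+1 =>
    match atom_of t, atom_of s with
    | Some a, Some b => RA a b
    | _, _ =>
      match t, s with
      | App t1 s1, App t2 s2 => tn (Rfuel n' t1 t2) (Rfuel n' s1 s2)
      | Lam x A t1, Lam y A' s1 =>
          if A == A' then
            (* z : fresh variable of type A *)
            let z := (maxn (maxname t) (maxname s)).+1 in
            Rfuel n' (rename x A z t1) (rename y A' z s1)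
          else 0
      | _, _ => 0
      end
    end
  end.

Definition Rterm (t s : term B C) : R := Rfuel (maxn (tsize t) (tsize s)) t s.

End Induced.

(* Main.v *)
Require Import Defs.
From HB Require Import structures.
From mathcomp Require Import all_boot all_order all_algebra.
From mathcomp Require Import reals.
Set Implicit Arguments. Unset Strict Implicit. Unset Printing Implicit Defensive.
Import Order.TTheory GRing.Theory Num.Theory.
Local Open Scope ring_scope.

Section Syn.
Variables (B C : eqType).

Fixpoint ren (f : nat -> sty B -> nat) (t : term B C) : term B C :=
  match t with
  | Var x A => Var (f x A) A
  | Cst c => Cst c
  | Lam x A b => Lam (f x A) A (ren f b)
  | App u s => App (ren f u) (ren f s)
  end.

Fixpoint occ (w : nat) (W : sty B) (t : term B C) : bool :=
  match t with
  | Var x A => (x == w) && (A == W)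
  | Cst _ => false
  | Lam x A b => ((x == w) && (A == W)) || occ w W b
  | App u s => occ w W u || occ w W s
  end.

Lemma occ_le w W t : occ w W t -> (w <= maxname t)%N.
Proof.
elim: t => [x A|c|x A b IH|u IHu s IHs] //=.
- by case/andP => /eqP -> _.
- case/orP => [/andP[/eqP -> _]|/IH H]; first exact: leq_maxl.
  exact: leq_trans H (leq_maxr _ _).
- case/orP => [/IHu H|/IHs H]; [exact: leq_trans H (leq_maxl _ _)|exact: leq_trans H (leq_maxr _ _)].
Qed.

Lemma occ_ren f w W t : occ w W t -> occ (f w W) W (ren f t).
Proof.
elim: t => [x A|c|x A b IH|u IHu s IHs] //=.
- by case/andP => /eqP -> /eqP ->; rewrite !eqxx.
- by case/orP => [/andP[/eqP -> /eqP ->]|/IH ->]; rewrite ?eqxx ?orbT.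
- by case/orP => [/IHu ->|/IHs ->]; rewrite ?orbT.
Qed.

Lemma occ_rename x A z w W t :
  occ w W (rename x A z t) -> occ w W t || ((w == z) && (W == A)).
Proof.
elim: t => [y A'|c|y A' b IH|u IHu s IHs] /=.
- case: ifP => _ /=; last by move->.
  by case/andP => /eqP -> /eqP ->; rewrite !eqxx orbT.
- by [].
- case: ifP => _ /=; first by move->.
  case/orP => [->//|/IH]; by case/orP => ->; rewrite ?orbT.
- case/orP => [/IHu|/IHs]; case/orP => ->; by rewrite ?orbT.
Qed.

Lemma ren_ext f g t : (forall w W, occ w W t -> f w W = g w W) -> ren f t = ren g t.
Proof.
elim: t => [x A|c|x A b IH|u IHu s IHs] /= H.
- by rewrite H //= !eqxx.
- by [].
- rewrite H /= ?eqxx // IH // => w W o; apply: H; by rewrite o orbT.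
- by rewrite IHu ?IHs // => w W o; apply: H; rewrite o ?orbT.
Qed.

Lemma ren_id t : ren (fun w _ => w) t = t.
Proof. by elim: t => //= [x A b ->|u -> s ->]. Qed.

Lemma tsize_ren f t : Defs.tsize (ren f t) = Defs.tsize t.
Proof. by elim: t => //= [x A b ->|u -> s ->]. Qed.

Lemma tsize_rename x A z (t : term B C) : Defs.tsize (rename x A z t) = Defs.tsize t.
Proof.
elim: t => [y A'|c|y A' b IH|u IHu s IHs] /=; try by [|case: ifP].
- by case: ifP => //= _; rewrite IH.
- by rewrite IHu IHs.
Qed.

Definition injon (f : nat -> sty B -> nat) (P : nat -> sty B -> bool) :=
  forall x y A, P x A -> P y A -> f x A = f y A -> x = y.

Lemma injon_sub f (P Q : nat -> sty B -> bool) :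
  injon f P -> (forall w W, Q w W -> P w W) -> injon f Q.
Proof. by move=> H S x y A qx qy; apply: H; apply: S. Qed.

Lemma ren_rename f x A z t :
  injon f (fun w W => occ w W t || ((w == x) && (W == A))) ->
  ren f (rename x A z t) = rename (f x A) A (f z A) (ren f t).
Proof.
elim: t => [y A'|c|y A' b IH|u IHu s IHs] /= Hi.
- case E: ((y == x) && (A' == A)).
    by move/andP: E => [/eqP -> /eqP ->]; rewrite /= !eqxx.
  have -> // : (f y A' == f x A) && (A' == A) = false.
  apply/negbTE/negP => /andP[/eqP fe /eqP ea]; subst A'.
  have yx : y = x by apply: (Hi y x A _ _ fe); rewrite /= !eqxx ?orbT.
  by subst; rewrite !eqxx in E.
- by [].
- case E: ((y == x) && (A' == A)).
    by move/andP: E => [/eqP -> /eqP ->]; rewrite /= !eqxx.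
  have -> : (f y A' == f x A) && (A' == A) = false.
    apply/negbTE/negP => /andP[/eqP fe /eqP ea]; subst A'.
    have yx : y = x by apply: (Hi y x A _ _ fe); rewrite /= !eqxx ?orbT.
    by subst; rewrite !eqxx in E.
  rewrite /= IH //; apply: (injon_sub Hi) => w W /=.
  by case/orP => ->; rewrite ?orbT.
- rewrite IHu ?IHs //; apply: (injon_sub Hi) => w W /=.
  + by case/orP => ->; rewrite ?orbT.
  + by case/orP => ->; rewrite ?orbT.
Qed.

End Syn.

Section Lam.
Variables (B C : eqType) (R : Type) (F : term B C -> term B C -> R) .

Lemma lam_step
  (IH : forall g t s, injon g (fun w W => occ w W t || occ w W s) ->
          F (ren g t) (ren g s) = F t s)
  f x y A b c z z' :
  injon f (fun w W => occ w W (Lam x A b) || occ w W (Lam y A c)) ->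
  (maxname (Lam x A b) < z)%N -> (maxname (Lam y A c) < z)%N ->
  (maxname (ren f (Lam x A b)) < z')%N -> (maxname (ren f (Lam y A c)) < z')%N ->
  F (rename (f x A) A z' (ren f b)) (rename (f y A) A z' (ren f c)) =
  F (rename x A z b) (rename y A z c).
Proof.
move=> Hi zt zs z't z's.
pose g := fun w W => if (w == z) && (W == A) then z' else f w W.
have oldz : forall w W, occ w W (Lam x A b) || occ w W (Lam y A c) -> (w < z)%N.
  move=> w W /orP[] /occ_le H; [exact: leq_ltn_trans H zt|exact: leq_ltn_trans H zs].
have oldz' : forall w W, occ w W (Lam x A b) || occ w W (Lam y A c) -> (f w W < z')%N.
  move=> w W /orP[] /(occ_ren f) /occ_le H; [exact: leq_ltn_trans H z't|exact: leq_ltn_trans H z's].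
have gold : forall w W, occ w W (Lam x A b) || occ w W (Lam y A c) -> g w W = f w W.
  by move=> w W /oldz H; rewrite /g; case: eqP => // E; rewrite E ltnn in H.
have gz : g z A = z' by rewrite /g !eqxx.
have sub1 : forall w W, occ w W b || ((w == x) && (W == A)) ->
    occ w W (Lam x A b) || occ w W (Lam y A c).
  by move=> w W /orP[o|/andP[/eqP -> /eqP ->]] /=; rewrite ?o ?eqxx ?orbT.
have sub2 : forall w W, occ w W c || ((w == y) && (W == A)) ->
    occ w W (Lam x A b) || occ w W (Lam y A c).
  by move=> w W /orP[o|/andP[/eqP -> /eqP ->]] /=; rewrite ?o ?eqxx ?orbT.
have Hg : injon g (fun w W => occ w W b || ((w == x) && (W == A))).
  by move=> u v W /sub1 pu /sub1 pv; rewrite !gold //; exact: Hi.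
have Hg' : injon g (fun w W => occ w W c || ((w == y) && (W == A))).
  by move=> u v W /sub2 pu /sub2 pv; rewrite !gold //; exact: Hi.
rewrite -[in RHS](IH g); last first.
  move=> u v W pu pv.
  have cls : forall w, occ w W (rename x A z b) || occ w W (rename y A z c) ->
     (occ w W (Lam x A b) || occ w W (Lam y A c)) \/ (w = z /\ W = A).
    move=> w /orP[/occ_rename|/occ_rename] /orP[o|/andP[/eqP -> /eqP ->]]; try by right.
    + by left; rewrite /= o orbT.
    + by left; rewrite /= o !orbT.
  case: (cls u pu) => [ou|[eu eW]]; case: (cls v pv) => [ov|[ev eW']].
  - by rewrite !gold //; exact: Hi.
  - by rewrite ev eW' in ou * ; rewrite [g u A]gold // gz => E; have := oldz' _ _ ou; rewrite E ltnn.
  - by rewrite eu eW in ov * ; rewrite [g v A]gold // gz => E; have := oldz' _ _ ov; rewrite -E ltnn.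
  - by rewrite eu ev.
rewrite !ren_rename // gz !gold /= ?eqxx ?orbT //.
have -> : ren g b = ren f b.
  by apply: ren_ext => w W o; apply: gold; rewrite /= o orbT.
have -> : ren g c = ren f c.
  by apply: ren_ext => w W o; apply: gold; rewrite /= o !orbT.
by [].
Qed.

End Lam.

From mathcomp Require Import zify.

Section Sem.
Variables (R : realType) (B C : eqType) (ctype : C -> sty B).
Variables (tn : R -> R -> R) (RA : sym B C -> sym B C -> R).
Hypothesis Htn : tnorm tn.
Hypothesis HRA : similarity (fun _ => True) tn RA.
Hypothesis Hc : RA_conditions ctype RA.

Local Notation Rf := (Rfuel tn RA).

Lemma in01_0 : in01 (0 : R). Proof. by rewrite /in01 lexx ler01. Qed.
Lemma in01_1 : in01 (1 : R). Proof. by rewrite /in01 lexx ler01. Qed.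

Lemma tn01 x y : in01 x -> in01 y -> in01 (tn x y).
Proof. by case: Htn => H _ _ _ _; apply: H. Qed.
Lemma tnC x y : in01 x -> in01 y -> tn x y = tn y x.
Proof. by case: Htn => _ _ H _ _; apply: H. Qed.
Lemma tnA x y z : in01 x -> in01 y -> in01 z -> tn x (tn y z) = tn (tn x y) z.
Proof. by case: Htn => _ H _ _ _; apply: H. Qed.
Lemma tnM x x' y y' : in01 x -> in01 x' -> in01 y -> in01 y' ->
  x <= x' -> y <= y' -> tn x y <= tn x' y'.
Proof. by case: Htn => _ _ _ H _; apply: H. Qed.
Lemma tn1 x : in01 x -> tn x 1 = x.
Proof. by case: Htn => _ _ _ _ H; apply: H. Qed.
Lemma tn0 y : in01 y -> tn 0 y = 0.
Proof.
move=> hy; apply/eqP; rewrite eq_le.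
have H := tnM in01_0 in01_0 hy in01_1 (lexx 0) (proj2 (andP hy)).
rewrite (tn1 in01_0) in H; rewrite H /=.
by case/andP: (tn01 in01_0 hy).
Qed.
Lemma tn0r x : in01 x -> tn x 0 = 0.
Proof. by move=> hx; rewrite (tnC hx in01_0) (tn0 hx). Qed.

Lemma RA01 a b : in01 (RA a b).
Proof. by case: HRA => H _ _ _; apply: H. Qed.
Lemma RArefl a : RA a a = 1.
Proof. by case: HRA => _ H _ _; apply: H. Qed.
Lemma RAsym a b : RA a b = RA b a.
Proof. by case: HRA => _ _ H _; apply: H. Qed.
Lemma RAtrans a b c : tn (RA a c) (RA c b) <= RA a b.
Proof. by case: HRA => _ _ _ H; apply: H. Qed.

Lemma RA_var x A y A' : RA (SV x A) (SV y A') = if (x == y) && (A == A') then 1 else 0.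
Proof.
case: ifP => [/andP[/eqP -> /eqP ->]|E]; first exact: RArefl.
case: Hc => H _ _ _; apply: H; apply/negP => /eqP [e1 e2].
by rewrite e1 e2 !eqxx in E.
Qed.

Lemma Rf01 n t s : in01 (Rf n t s).
Proof.
elim: n t s => [|n IH] t s; first exact: in01_0.
case: t => [x A|c|x A b|u1 u2]; case: s => [y A'|d|y A' b'|v1 v2] /=;
  try exact: RA01; try exact: in01_0; try (apply: tn01; apply: IH).
by case: ifP => _; [apply: IH|exact: in01_0].
Qed.

Lemma Rfuel_ren n f t s : injon f (fun w W => occ w W t || occ w W s) ->
  Rf n (ren f t) (ren f s) = Rf n t s.
Proof.
elim: n f t s => [//|n IH] f t s.
case: t => [x A|c|x A b|u1 u2]; case: s => [y A'|d|y A' b'|v1 v2] Hi //=.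
- rewrite !RA_var; case: (eqVneq A A') => [EA|nA]; last by rewrite !andbF.
  subst A'; rewrite !andbT; case: (eqVneq x y) => [->|nxy]; first by rewrite eqxx.
  case: eqP => // E; case/eqP: nxy; apply: (Hi x y A _ _ E) => /=; by rewrite !eqxx ?orbT.
- by case: Hc => _ _ -> _; case: Hc => _ _ -> _.
- by case: Hc => _ _ _ ->; case: Hc => _ _ _ ->.
- case: eqP => // EA; subst A'.
  apply: (lam_step (F := Rf n) (IH)) => //=; rewrite ltnS ?leq_maxl ?leq_maxr //.
- congr (tn _ _); apply: IH; apply: (injon_sub Hi) => w W /= /orP[]->; by rewrite ?orbT.
Qed.

Lemma Rf_alpha n x y A b c z z' :
  (maxname (Lam x A b) < z)%N -> (maxname (Lam y A c) < z)%N ->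
  (maxname (Lam x A b) < z')%N -> (maxname (Lam y A c) < z')%N ->
  Rf n (rename x A z' b) (rename y A z' c) = Rf n (rename x A z b) (rename y A z c).
Proof.
move=> h1 h2 h3 h4.
have := lam_step (F := Rf n) (@Rfuel_ren n) (f := fun w _ => w) (x := x) (y := y) (A := A)
  (b := b) (c := c) (z := z) (z' := z').
rewrite !ren_id; apply => //; by move=> ? ? ? _ _.
Qed.

Lemma Rfuel_fuel n k t s : (maxn (Defs.tsize t) (Defs.tsize s) <= n)%N ->
  Rf (n + k) t s = Rf n t s.
Proof.
elim: n k t s => [|n IH] k t s.
  by case: t => [x A|c|x A b|u1 u2] /=; rewrite geq_max => /andP[].
rewrite addSn.
case: t => [x A|c|x A b|u1 u2]; case: s => [y A'|d|y A' b'|v1 v2] //= H.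
- case: eqP => // _; apply: IH; rewrite !tsize_rename; lia.
- rewrite !IH //; lia.
Qed.

Lemma Rf_refl n t : (Defs.tsize t <= n)%N -> Rf n t t = 1.
Proof.
elim: n t => [|n IH] t; first by case: t.
case: t => [x A|c|x A b|u1 u2] /= H; try exact: RArefl.
- by rewrite eqxx IH // tsize_rename.
- by rewrite !IH ?(tn1 in01_1) //; lia.
Qed.

Lemma Rf_sym n t s : Rf n t s = Rf n s t.
Proof.
elim: n t s => [//|n IH] t s.
case: t => [x A|c|x A b|u1 u2]; case: s => [y A'|d|y A' b'|v1 v2] //=; try exact: RAsym.
- by rewrite eq_sym maxnC; case: eqP => // ->; rewrite IH.
- by rewrite (IH u1) (IH u2) tnC //; apply: Rf01.
Qed.

Lemma Rf_trans n t u s :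
  (maxn (Defs.tsize t) (maxn (Defs.tsize u) (Defs.tsize s)) <= n)%N ->
  tn (Rf n t u) (Rf n u s) <= Rf n t s.
Proof.
elim: n t u s => [|n IH] t u s.
  by case: t => [x A|c|x A b|u1 u2] /=; lia.
move=> H.
have Hnn := Rf01 n.+1 t s; have H1 := Rf01 n.+1 t u; have H2 := Rf01 n.+1 u s.
case: t H Hnn H1 H2 => [x A|c|x A b|u1 u2]; case: u => [y A'|d|y A' b'|v1 v2];
  case: s => [w A''|e|w A'' b''|s1 s2] /= H Hnn H1 H2;
  try exact: RAtrans;
  try (rewrite (tn0r H1); by case/andP: Hnn);
  try (rewrite (tn0 H2); by case/andP: Hnn).
- case: eqP H1 => [EA|_] H1; last by rewrite (tn0 H2); case/andP: Hnn.
  case: eqP H2 => [EA'|_] H2; last by rewrite (tn0r H1); case/andP: Hnn.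
  subst A' A''; rewrite eqxx.
  pose z := (maxn (maxname (Lam x A b)) (maxn (maxname (Lam y A b')) (maxname (Lam w A b'')))).+1.
  rewrite (@Rf_alpha n x y A b b' z); rewrite ?/z /=; try lia.
  rewrite (@Rf_alpha n y w A b' b'' z); rewrite ?/z /=; try lia.
  rewrite (@Rf_alpha n x w A b b'' z); rewrite ?/z /=; try lia.
  apply: IH; rewrite !tsize_rename; lia.
- have a1 := Rf01 n u1 v1; have a2 := Rf01 n u2 v2.
  have b1 := Rf01 n v1 s1; have b2 := Rf01 n v2 s2.
  rewrite -(tnA a1 a2 (tn01 b1 b2)) (tnA a2 b1 b2) (tnC a2 b1) -(tnA b1 a2 b2).
  rewrite (tnA a1 b1 (tn01 a2 b2)).
  apply: tnM; try apply: tn01; try apply: Rf01; try done.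
  + apply: IH; lia.
  + apply: IH; lia.
Qed.

Lemma Rterm_fuel n t s : (maxn (Defs.tsize t) (Defs.tsize s) <= n)%N ->
  Rterm tn RA t s = Rf n t s.
Proof.
move=> H; rewrite /Rterm -(subnKC H) Rfuel_fuel //.
Qed.

Lemma Rterm_sim (P : term B C -> Prop) : similarity P tn (Rterm tn RA).
Proof.
split.
- by move=> t s _ _; exact: Rf01.
- by move=> t _; rewrite /Rterm Rf_refl // maxnn.
- by move=> t s _ _; rewrite /Rterm maxnC Rf_sym.
- move=> t s u _ _ _.
  set N := maxn (Defs.tsize t) (maxn (Defs.tsize u) (Defs.tsize s)).
  rewrite (@Rterm_fuel N t u) ?(@Rterm_fuel N u s) ?(@Rterm_fuel N t s) /N; try lia.
  apply: Rf_trans; lia.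
Qed.

End Sem.

Theorem theorem1 (R : realType) (B C : countType) (ctype : C -> sty B)
    (C_infinite : forall s : seq C, exists c : C, c \notin s)
    (tn : R -> R -> R) (RA : sym B C -> sym B C -> R) :
  tnorm tn ->
  similarity (fun _ : sym B C => True) tn RA ->
  RA_conditions ctype RA ->
  similarity (fun t : term B C => wt_lnf ctype t) tn (Rterm tn RA).
Proof.
move=> Htn HRA Hc; exact: (Rterm_sim Htn HRA Hc).
Qed.
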